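(* Let $\Gamma,\Delta,\Pi,\Sigma$ be finite multisets of $\mathcal{L}_{A_m}^{\Box}$-formulas such that the sequent $\Gamma,\Pi\Rightarrow\Sigma,\Delta$ is $\mathsf{K(A)}$-valid and no variable occurs both in a formula of $\Gamma\uplus\Delta$ and in a formula of $\Pi\uplus\Sigma$. Then $\Gamma\Rightarrow\Delta$ and $\Pi\Rightarrow\Sigma$ are both $\mathsf{K(A)}$-valid.
   Context: $\mathcal{L}_{A_m}^{\Box}$-formulas are built from a countably infinite set $\mathrm{Var}$ of variables using binary $\to$ and unary $\Box$. Fix $p_0\in\mathrm{Var}$; $\overline{0}:=p_0\to p_0$, $\neg\varphi:=\varphi\to\overline{0}$, $\varphi\&\psi:=\neg\varphi\to\psi$. A $\mathsf{K(A)}$-model $\langle W,R,V\rangle$: nonempty $W$, $R\subseteq W\times W$, $V\colon\mathrm{Var}\times W\to[-r,r]$ for some real $r\ge0$, extended by $V(\varphi\to\psi,x)=V(\psi,x)-V(\varphi,x)$, $V(\Box\varphi,x)=\inf_{\mathbb{R}}\{V(\varphi,y):Rxy\}$ (empty infimum $=0$). A formula is $\mathsf{K(A)}$-valid if its value is $\ge0$ at every world of every model. A sequent $\Gamma\Rightarrow\Delta$ is an ordered pair of finite multisets of formulas; it is $\mathsf{K(A)}$-valid if $\mathcal{I}(\Gamma\Rightarrow\Delta)$ is, where $\mathcal{I}(\varphi_1,\dots,\varphi_n\Rightarrow\psi_1,\dots,\psi_m):=(\varphi_1\&\dots\&\varphi_n)\to(\psi_1\&\dots\&\psi_m)$, empty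 $\&$-combination $=\overline{0}$ (equivalently: $\sum_i V(\varphi_i,x)\le\sum_j V(\psi_j,x)$ everywhere). *)

(* Defs.v *)
From mathcomp Require Import all_boot all_order all_algebra.
From mathcomp Require Import classical_sets reals.
Set Implicit Arguments. Unset Strict Implicit. Unset Printing Implicit Defensive.
Import Order.TTheory GRing.Theory Num.Theory.
Local Open Scope classical_set_scope.
Local Open Scope ring_scope.

Inductive kform : Type :=
| Var : nat -> kform
| Imp : kform -> kform -> kform
| Box : kform -> kform.

Definition p0 : kform := Var 0.
Definition zero_f : kform := Imp p0 p0.
Definition neg_f (f : kform) : kform := Imp f zero_f.
Definition and_f (f g : kform) : kform := Imp (neg_f f) g.

(* phi_1 & ... & phi_n (right-nested), empty combination = 0bar *)
Fixpoint bigand (l : seq kform) : kform :=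
  match l with
  | [::] => zero_f
  | [:: f] => f
  | f :: l' => and_f f (bigand l')
  end.

Fixpoint vars (f : kform) : seq nat :=
  match f with
  | Var n => [:: n]
  | Imp a b => vars a ++ vars b
  | Box a => vars a
  end.

Definition vars_ms (l : seq kform) : seq nat := flatten (map vars l).

Record model (R : realType) := Model {
  world : Type;
  world_ne : inhabited world;
  acc : world -> world -> Prop;
  val : nat -> world -> R;
  val_bounded : exists r : R, 0 <= r /\ forall p x, - r <= val p x <= r
}.

Fixpoint eval (R : realType) (M : model R) (f : kform) (x : world M) : R :=
  match f with
  | Var p => @val R M p x
  | Imp a b => @eval R M b x - @eval R M a x
  | Box a => inf [set @eval R M a y | y in [set y | @acc R M x y]]
  end.

Definition valid (R : realType) (f : kform) : Prop :=
  forall (M : model R) (x : world M), 0 <= @eval R M f x.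

(* sequents: pairs of finite multisets, represented as lists *)
Definition seq_interp (G D : seq kform) : kform := Imp (bigand G) (bigand D).

Definition seq_valid (R : realType) (G D : seq kform) : Prop :=
  valid R (seq_interp G D).

(* Main.v *)
Require Import Defs.
From mathcomp Require Import all_boot all_order all_algebra.
From mathcomp Require Import classical_sets reals.
From mathcomp Require Import boolp.
From Stdlib Require List.
Import Order.TTheory GRing.Theory Num.Theory.
Local Open Scope classical_set_scope.
Local Open Scope ring_scope.

Section Aux.
Variable R : realType.

Lemma restrict_bounded (M : model R) (P : pred nat) :
  exists r : R, 0 <= r /\ forall p (x : world M),
    - r <= (if P p then @Defs.val R M p x else 0) <= r.
Proof.
case: (val_bounded M) => r [r0 hr]; exists r; split => // p x.
case: (P p) => //; rewrite oppr_le0 r0 andbT //.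
Qed.

Definition restrict (M : model R) (P : pred nat) : model R :=
  @Model R (world M) (world_ne M) (@acc R M)
    (fun p x => if P p then @Defs.val R M p x else 0) (restrict_bounded M P).

Lemma eval_restrict_in (M : model R) (P : pred nat) (f : kform) :
  (forall p, p \in vars f -> P p) ->
  forall x : world M, @eval R (restrict M P) f x = @eval R M f x.
Proof.
elim: f => [n|a IHa b IHb|a IHa] H x /=.
- by rewrite H // inE.
- rewrite IHa ?IHb // => p hp; apply: H; rewrite mem_cat hp ?orbT //.
- have E : (fun y => @eval R (restrict M P) a y) = (fun y => @eval R M a y).
    by apply: funext => y; apply: IHa.
  by rewrite E.
Qed.

Lemma eval_restrict_out (M : model R) (P : pred nat) (f : kform) :
  (forall p, p \in vars f -> ~~ P p) ->
  forall x : world M, @eval R (restrict M P) f x = 0.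
Proof.
elim: f => [n|a IHa b IHb|a IHa] H x /=.
- by rewrite ifN // H // inE.
- rewrite IHa ?IHb ?subr0 // => p hp; apply: H; rewrite mem_cat hp ?orbT //.
- have E : (fun y => @eval R (restrict M P) a y) = (fun => 0).
    by apply: funext => y; apply: IHa.
  rewrite E.
  have [[y hy]|nex] := pselect (exists y, @acc R M x y).
    have -> : [set (fun=> 0 : R) y0 | y0 in [set y0 | @acc R M x y0]] = [set 0].
      apply/seteqP; split => z /=.
        by case => ? _ <-.
      by move=> ->; exists y.
    by rewrite inf1.
  have -> : [set (fun=> 0 : R) y0 | y0 in [set y0 | @acc R M x y0]] = set0.
    apply/seteqP; split => z //=.
    by case => y0 hy0; exfalso; apply: nex; exists y0.
  by rewrite inf0.
Qed.

Lemma eval_bigand (M : model R) (l : seq kform) (x : world M) :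
  @eval R M (bigand l) x = \sum_(f <- l) @eval R M f x.
Proof.
elim: l => [|f l IH] /=.
  by rewrite big_nil subrr.
rewrite big_cons; case: l IH => [|g l] IH /=.
  by rewrite big_nil addr0.
rewrite -IH /= subrr.
by rewrite sub0r opprK addrC.
Qed.

Lemma seq_validP (G D : seq kform) :
  seq_valid R G D <-> forall (M : model R) (x : world M),
    \sum_(f <- G) @eval R M f x <= \sum_(f <- D) @eval R M f x.
Proof.
rewrite /seq_valid /valid /seq_interp; split => H M x.
  by have := H M x; rewrite /= !eval_bigand subr_ge0.
by rewrite /= !eval_bigand subr_ge0.
Qed.

Lemma in_vars_ms (l : seq kform) (f : kform) (p : nat) :
  List.In f l -> p \in vars f -> p \in vars_ms l.
Proof.
elim: l => [|g l IH] //= [->|hf] hp; rewrite /vars_ms /= mem_cat.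
  by rewrite hp.
by rewrite IH ?orbT.
Qed.

Lemma eq_sum_in (l : seq kform) (F G : kform -> R) :
  (forall f, List.In f l -> F f = G f) ->
  \sum_(f <- l) F f = \sum_(f <- l) G f.
Proof.
elim: l => [|g l IH] H; first by rewrite !big_nil.
rewrite !big_cons H /= ?IH //; first by move=> f hf; apply: H; right.
by left.
Qed.

Lemma sum0_in (l : seq kform) (F : kform -> R) :
  (forall f, List.In f l -> F f = 0) -> \sum_(f <- l) F f = 0.
Proof.
move=> H; rewrite (@eq_sum_in l F (fun => 0)) //.
by rewrite big1.
Qed.

End Aux.

Theorem lemma4p7 (R : realType) (Gamma Delta Pi Sigma : seq kform) :
  seq_valid R (Gamma ++ Pi) (Sigma ++ Delta) ->
  (forall p : nat, p \in vars_ms (Gamma ++ Delta) -> p \notin vars_ms (Pi ++ Sigma)) ->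
  seq_valid R Gamma Delta /\ seq_valid R Pi Sigma.
Proof.
move=> /seq_validP H Hd; split; apply/seq_validP => M x.
- pose P := fun p => p \in vars_ms (Gamma ++ Delta).
  have := H (@restrict R M P) x.
  rewrite !big_cat /=.
  rewrite (@sum0_in R Pi); last first.
    move=> f hf; apply: eval_restrict_out => p hp.
    apply/negP => hP; have := Hd p hP; rewrite (@in_vars_ms _ f p _ hp) //.
    by apply: List.in_or_app; left.
  rewrite (@sum0_in R Sigma); last first.
    move=> f hf; apply: eval_restrict_out => p hp.
    apply/negP => hP; have := Hd p hP; rewrite (@in_vars_ms _ f p _ hp) //.
    by apply: List.in_or_app; right.
  rewrite addr0 add0r.
  rewrite (@eq_sum_in R Gamma _ (fun f => @eval R M f x)); last first.
    move=> f hf; apply: eval_restrict_in => p hp; apply: (@in_vars_ms _ f p _ hp).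
    by apply: List.in_or_app; left.
  rewrite (@eq_sum_in R Delta _ (fun f => @eval R M f x)) //.
  move=> f hf; apply: eval_restrict_in => p hp; apply: (@in_vars_ms _ f p _ hp).
  by apply: List.in_or_app; right.
- pose P := fun p => p \in vars_ms (Pi ++ Sigma).
  have := H (@restrict R M P) x.
  rewrite !big_cat /=.
  rewrite (@sum0_in R Gamma); last first.
    move=> f hf; apply: eval_restrict_out => p hp.
    apply: Hd; apply: (@in_vars_ms _ f p _ hp).
    by apply: List.in_or_app; left.
  rewrite (@sum0_in R Delta); last first.
    move=> f hf; apply: eval_restrict_out => p hp.
    apply: Hd; apply: (@in_vars_ms _ f p _ hp).
    by apply: List.in_or_app; right.
  rewrite addr0 add0r.
  rewrite (@eq_sum_in R Pi _ (fun f => @eval R M f x)); last first.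
    move=> f hf; apply: eval_restrict_in => p hp; apply: (@in_vars_ms _ f p _ hp).
    by apply: List.in_or_app; left.
  rewrite (@eq_sum_in R Sigma _ (fun f => @eval R M f x)) //.
  move=> f hf; apply: eval_restrict_in => p hp; apply: (@in_vars_ms _ f p _ hp).
  by apply: List.in_or_app; right.
Qed.
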